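(* For $(w,x,y,z)$ define $$\tilde{\mathcal{J}}_1=\frac{(w^2+z^2)xy+\beta(wx+wz+yz)}{wxyz},$$ $$\tilde{\mathcal{J}}_2=\frac{w^2z^2+xz(w^2+x^2+y^2+xz)+wy(x^2+y^2+z^2+wy)+\beta(x^2+y^2+xz+wy)}{wxyz},$$ $$\tilde{\mathcal{J}}_3=\frac{(w+y)(x+z)(xz+yw+\beta)}{wxyz}.$$ Then for every $\beta\in\mathbb{Z}\setminus\{0,-1\}$ and every $(\lambda_1:\lambda_2:\lambda_3)\in\mathbb{P}^2$, the Diophantine equation $$\lambda_1\tilde{\mathcal{J}}_1+\lambda_2\tilde{\mathcal{J}}_2+\lambda_3\tilde{\mathcal{J}}_3=\lambda_1(3\beta+2)+\lambda_2(4\beta+9)+4\lambda_3(\beta+2)$$ has infinitely many integer solutions $(w,x,y,z)$. *)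

(* Defs.v *)
From mathcomp Require Import all_boot all_order all_algebra all_field.
Set Implicit Arguments. Unset Strict Implicit. Unset Printing Implicit Defensive.
Import Order.TTheory GRing.Theory Num.Theory.
Local Open Scope ring_scope.

Definition Jt1 (beta w x y z : int) : algC :=
  (((w^2 + z^2) * x * y + beta * (w*x + w*z + y*z))%R%:~R) / ((w*x*y*z)%R%:~R).

Definition Jt2 (beta w x y z : int) : algC :=
  ((w^2 * z^2 + x*z*(w^2 + x^2 + y^2 + x*z) + w*y*(x^2 + y^2 + z^2 + w*y)
     + beta * (x^2 + y^2 + x*z + w*y))%R%:~R) / ((w*x*y*z)%R%:~R).

Definition Jt3 (beta w x y z : int) : algC :=
  (((w + y) * (x + z) * (x*z + y*w + beta))%R%:~R) / ((w*x*y*z)%R%:~R).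

(* (w,x,y,z) is an integer solution of the equation (requires wxyz <> 0 so the
   J~_i are defined). *)
Definition is_solution (beta : int) (l1 l2 l3 : algC) (w x y z : int) : Prop :=
  w * x * y * z != 0 /\
  l1 * Jt1 beta w x y z + l2 * Jt2 beta w x y z + l3 * Jt3 beta w x y z
  = l1 * ((3 * beta + 2)%R%:~R) + l2 * ((4 * beta + 9)%R%:~R)
    + 4%:R * l3 * ((beta + 2)%R%:~R).

Definition infinitely_many (P : int -> int -> int -> int -> Prop) : Prop :=
  forall s : seq (int * int * int * int),
    exists w x y z, P w x y z /\ (w, x, y, z) \notin s.

(* Main.v *)
Require Import Defs.
From mathcomp Require Import all_boot all_order all_algebra all_field.
From mathcomp Require Import zify ring lra.
Import Order.TTheory GRing.Theory Num.Theory.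
Local Open Scope ring_scope.

Definition conic (b a d : int) : int := 3*d^+2 - 3*b*a*d - b*a^+2 + b.

Lemma ap_sol (b a d : int) (l1 l2 l3 : algC) :
  conic b a d = 0 -> a * (a + d) * (a + 2*d) * (a + 3*d) != 0 ->
  is_solution b l1 l2 l3 a (a+d) (a+2*d) (a+3*d).
Proof.
move=> hC hD; split => //.
have hDC : ((a * (a + d) * (a + 2*d) * (a + 3*d))%R%:~R : algC) != 0.
  by rewrite intr_eq0.
have E1 : Jt1 b a (a+d) (a+2*d) (a+3*d) = ((3 * b + 2)%R%:~R).
  rewrite /Jt1; apply: (canLR (mulfK hDC)); rewrite -intrM; congr (_%:~R).
  have : (6*d^+2 + 9*a*d + 3*a^+2) * conic b a d = 0 by rewrite hC mulr0.
  rewrite /conic => H; apply/eqP; rewrite -subr_eq0; apply/eqP; rewrite -H; ring.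
have E2 : Jt2 b a (a+d) (a+2*d) (a+3*d) = ((4 * b + 9)%R%:~R).
  rewrite /Jt2; apply: (canLR (mulfK hDC)); rewrite -intrM; congr (_%:~R).
  have : (8*d^+2 + 12*a*d + 4*a^+2) * conic b a d = 0 by rewrite hC mulr0.
  rewrite /conic => H; apply/eqP; rewrite -subr_eq0; apply/eqP; rewrite -H; ring.
have E3 : Jt3 b a (a+d) (a+2*d) (a+3*d) = ((4 * b + 8)%R%:~R).
  rewrite /Jt3; apply: (canLR (mulfK hDC)); rewrite -intrM; congr (_%:~R).
  have : (8*d^+2 + 12*a*d + 4*a^+2) * conic b a d = 0 by rewrite hC mulr0.
  rewrite /conic => H; apply/eqP; rewrite -subr_eq0; apply/eqP; rewrite -H; ring.
rewrite E1 E2 E3; congr (_ + _).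
have -> : (4 * b + 8 = 4 * (b + 2))%R by ring.
rewrite intrM /=. ring.
Qed.

Fixpoint sq (b : int) (n : nat) : int * int :=
  match n with
  | 0%N => (1, b)
  | S n => let: (a, d) := sq b n in (a + 3*d, b*(a+3*d) + d)
  end.

Lemma sq_conic b n : conic b (sq b n).1 (sq b n).2 = 0.
Proof.
elim: n => [|n IH] /=; first by rewrite /conic; ring.
case: (sq b n) IH => a d /= IH; rewrite -IH /conic; ring.
Qed.

Lemma sq_pos b n : 0 < b -> (n%:Z < (sq b n).1) /\ 0 < (sq b n).2.
Proof.
move=> hb; elim: n => [|n IH] /=; first by split => //; lia.
case: (sq b n) IH => a d /= [h1 h2]; split; nia.
Qed.

Lemma sq_neg b n : b <= -2 ->
  (n%:Z < (sq b n).1 /\ (sq b n).1 < - (sq b n).2) \/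
  ((sq b n).1 < - n%:Z /\ - (sq b n).1 < (sq b n).2).
Proof.
move=> hb; elim: n => [|n IH] /=; first by left; split; lia.
case: (sq b n) IH => a d /= [[h1 h2]|[h1 h2]].
  by right; split; nia.
by left; split; nia.
Qed.

Lemma key (b : int) : b != 0 -> b != -1 -> forall n : nat,
  exists a d, conic b a d = 0 /\ (n < absz a)%N /\
    a * (a + d) * (a + 2*d) * (a + 3*d) != 0.
Proof.
move=> hb0 hb1 n; exists (sq b n).1, (sq b n).2; split; first exact: sq_conic.
case: (ltrP 0 b) => hb.
  have [h1 h2] := @sq_pos b n hb.
  split; first lia.
  by rewrite !mulf_neq0 //; apply/eqP; lia.
have hb2 : b <= -2 by move: hb0 hb1 hb; lia.
case: (@sq_neg b n hb2) => [[h1 h2]|[h1 h2]].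
  split; first lia.
  by rewrite !mulf_neq0 //; apply/eqP; lia.
split; first lia.
by rewrite !mulf_neq0 //; apply/eqP; lia.
Qed.

Lemma bound_seq (s : seq (int * int * int * int)) :
  exists M : nat, forall t, t \in s -> (absz t.1.1.1 <= M)%N.
Proof.
elim: s => [|u s [M HM]]; first by exists 0%N.
exists (absz u.1.1.1 + M)%N => t; rewrite in_cons => /orP [/eqP -> | /HM h]; [exact: leq_addr | exact: leq_trans h (leq_addl _ _)].
Qed.

Theorem corollary3p10 (beta : int) (l1 l2 l3 : algC) :
  beta != 0 -> beta != -1 ->
  (l1, l2, l3) != (0, 0, 0) ->
  infinitely_many (is_solution beta l1 l2 l3).
Proof.
move=> hb0 hb1 _ s.
have [M HM] := bound_seq s.
have [a [d [hC [hn hD]]]] := @key beta hb0 hb1 M.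
exists a, (a+d), (a+2*d), (a+3*d); split; first exact: ap_sol.
apply/negP => /HM h.
by move: (leq_ltn_trans h hn); rewrite ltnn.
Qed.
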